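(* Let $\lambda\neq 0$ be real, let $r\ge 1$ and $a_1,\dots,a_r\ge 1$ be integers, and let $G$ be the threshold graph with block sequence $0^{a_1}1^{a_2}0^{a_3}\cdots b_r^{a_r}$ and bags $B_1,\dots,B_r$. Let $\epsilon_{i,j}$ ($1\le i<j\le r$, $j$ even) be arbitrary nonzero reals, and define for $1\le i\le r$: $p_i=0,\ \epsilon_i=0$ if $i\equiv 1\pmod 4$; $p_i=\frac{\lambda(a_i-1)}{a_i},\ \epsilon_i=-\frac{\lambda}{a_i}$ if $i\equiv 2\pmod 4$; $p_i=\lambda,\ \epsilon_i=0$ if $i\equiv 3\pmod 4$; $p_i=\frac{\lambda}{a_i},\ \epsilon_i=\frac{\lambda}{a_i}$ if $i\equiv 0\pmod 4$. Let $M$ be the uniform weighted matrix of $G$ with these parameters. Let $T_1$ be the single-vertex-bag weighted threshold matrix on $v_1,\dots,v_r$ with vertex weights $p^{(1)}_i=0$ if $i\equiv 1,2\pmod 4$ and $p^{(1)}_i=\lambda$ if $i\equiv 0,3\pmod 4$, and edge weights $\epsilon^{(1)}_{i,j}=\epsilon_{i,j}\sqrt{a_ia_j}$ ($i<j$, $j$ even). Then, as multisets, $$\mathrm{Spec}(M)=\mathrm{Spec}(T_1)\cup\{0^{[A]},\lambda^{[B]}\},$$ where $A=\sum_{1\le i\le r,\ i\equiv 0,1 \ (\mathrm{mod}\ 4)}(a_i-1)$ and $B=\sum_{1\le i\le r,\ i\equiv 2,3\ (\mathrm{mod}\ 4)}(a_i-1)$, and $x^{[m]}$ denotes $m$ copies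 of $x$.
   Context: Threshold graph with block sequence $0^{a_1}1^{a_2}0^{a_3}1^{a_4}\cdots b_r^{a_r}$ ($a_i\ge 1$, $b_i=0$ for $i$ odd and $b_i=1$ for $i$ even): its vertex set is partitioned into bags $B_1,\dots,B_r$ with $|B_i|=a_i$ (added in this order, the vertices of $B_i$ being added as isolated vertices if $i$ is odd and as dominating vertices if $i$ is even); two distinct vertices $u\in B_i$, $v\in B_j$ with $i\le j$ are adjacent if and only if $j$ is even. Uniform weighted matrix: given reals $p_i$, $\epsilon_i$ ($\epsilon_i\ne0$ when $i$ is even) and nonzero reals $\epsilon_{i,j}$ ($i<j$, $j$ even), it is the symmetric matrix $M$ indexed by the vertices with $M_{vv}=p_i$ for $v\in B_i$; $M_{uv}=\epsilon_i$ for distinct $u,v\in B_i$ with $i$ even; $M_{uv}=\epsilon_{i,j}$ for $u\in B_i$, $v\in B_j$, $i<j$, $j$ even; and all other entries $0$. A single-vertex-bag weighted threshold matrix on $v_k,\dots,v_r$ (the case $a_i=1$ for all $i$, with indices starting at $k$) is the symmetric matrix indexed by $v_k,\dots,v_r$ with diagonal entries $p_i$ and, for $i<j$, entry $\epsilon_{i,j}\ne 0$ at $(v_i,v_j)$ if $j$ is even and $0$ if $j$ is odd. $\mathrm{Spec}$ denotes the multiset of eigenvalues, and $\cup$ of multisets adds multiplicities. *)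

(* Defs.v *)
From HB Require Import structures.
From mathcomp Require Import all_boot all_order all_algebra.
Set Implicit Arguments. Unset Strict Implicit. Unset Printing Implicit Defensive.
Import Order.TTheory GRing.Theory Num.Theory.
Local Open Scope ring_scope.

(* Conventions: bags/indices are 'I_r with 0-based index k, corresponding to
   the paper's index i = k.+1.  "paper index even" = ~~ odd k.+1. *)

Definition peven (r : nat) (k : 'I_r) : bool := ~~ odd k.+1.

Definition bagV (r : nat) (a : 'I_r -> nat) : finType := {k : 'I_r & 'I_(a k)}.

Definition uwm_entry (R : ringType) (r : nat) (a : 'I_r -> nat)
  (p e1 : 'I_r -> R) (e2 : 'I_r -> 'I_r -> R) (u v : bagV a) : R :=
  let i := tag u in let j := tag v in
  if u == v then p i
  else if i == j then (if peven i then e1 i else 0)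
  else if (i < j)%N then (if peven j then e2 i j else 0)
  else (if peven i then e2 j i else 0).

Definition uniform_weighted_matrix (R : ringType) (r : nat) (a : 'I_r -> nat)
  (p e1 : 'I_r -> R) (e2 : 'I_r -> 'I_r -> R) : 'M[R]_#|bagV a| :=
  \matrix_(s, t) uwm_entry p e1 e2 (enum_val s) (enum_val t).

Definition sv_threshold_matrix (R : ringType) (r : nat)
  (p : 'I_r -> R) (e : 'I_r -> 'I_r -> R) : 'M[R]_r :=
  \matrix_(i, j)
    if i == j then p i
    else if (i < j)%N then (if peven j then e i j else 0)
    else (if peven i then e j i else 0).

(* Multiset of eigenvalues: multiplicity of x in Spec(A) = multiplicity of x
   as a root of the characteristic polynomial. *)
Definition spec_mult (R : fieldType) (n : nat) (A : 'M[R]_n) (x : R) : nat :=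
  mup x (char_poly A).

Definition m4 (r : nat) (k : 'I_r) : nat := (k.+1 %% 4)%N.

Arguments uniform_weighted_matrix {R r} a p e1 e2.

(* Main.v *)
Require Import Defs.
From HB Require Import structures.
From mathcomp Require Import all_boot all_order all_algebra.
From mathcomp Require Import fingroup perm ring.
Import Order.TTheory GRing.Theory Num.Theory.
Set Implicit Arguments. Unset Strict Implicit. Unset Printing Implicit Defensive.
Local Open Scope ring_scope.

Lemma char_poly_conj (R : comNzRingType) n (A P P' : 'M[R]_n) :
  P' *m P = 1%:M -> char_poly (P' *m A *m P) = char_poly A.
Proof.
move=> PP.
have e : char_poly_mx (P' *m A *m P) =
   map_mx polyC P' *m char_poly_mx A *m map_mx polyC P.
  rewrite /char_poly_mx mulmxBr mulmxBl -!map_mxM mul_mx_scalar -scalemxAl.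
  by rewrite -map_mxM PP map_mx1 scalemx1.
rewrite /char_poly e !det_mulmx mulrAC -det_mulmx -map_mxM PP map_mx1 det1 mul1r.
done.
Qed.

Lemma char_poly_perm (R : comNzRingType) n (A : 'M[R]_n) (s : 'S_n) :
  char_poly (\matrix_(i, j) A (s i) (s j)) = char_poly A.
Proof.
have -> : \matrix_(i, j) A (s i) (s j) = perm_mx s *m A *m perm_mx s^-1.
  rewrite -row_permE -col_permE; apply/matrixP => i j; by rewrite !mxE.
by rewrite char_poly_conj // -perm_mxM mulgV perm_mx1.
Qed.

Lemma char_poly_bij (R : comNzRingType) (T : finType) (F : T -> T -> R) n1 n2
   (f : 'I_n1 -> T) (g : 'I_n2 -> T) : bijective f -> bijective g ->
  char_poly (\matrix_(i, j) F (f i) (f j)) = char_poly (\matrix_(i, j) F (g i) (g j)).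
Proof.
move=> bf bg.
have e : n1 = n2.
  by rewrite -(card_ord n1) -(card_ord n2) (bij_eq_card bf) (bij_eq_card bg).
subst n2.
case: bg => g' gK Kg.
have inj_h : injective (g' \o f).
  by move=> x y /= /(can_inj Kg); apply: bij_inj.
transitivity (char_poly (\matrix_(i, j) (\matrix_(i0, j0) F (g i0) (g j0)) (perm inj_h i) (perm inj_h j))); last exact: char_poly_perm.
congr char_poly; apply/matrixP => i j; rewrite !mxE !permE /= !Kg //.
Qed.

Lemma char_poly_sim (R : comNzRingType) n (A B P P' : 'M[R]_n) :
  P' *m P = 1%:M -> A *m P = P *m B -> char_poly B = char_poly A.
Proof.
move=> PP e; rewrite -(@char_poly_conj _ _ A _ _ PP) -mulmxA e mulmxA PP mul1mx //.
Qed.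

Lemma char_poly_lblock (R : comNzRingType) n1 n2 (A : 'M[R]_n1)
  (C : 'M_(n2, n1)) (B : 'M_n2) :
  char_poly (block_mx A 0 C B) = char_poly A * char_poly B.
Proof.
rewrite /char_poly /char_poly_mx map_block_mx (scalar_mx_block n1 n2).
rewrite opp_block_mx add_block_mx map_mx0 oppr0 addr0 det_lblock //.
Qed.

Definition Sv r (a : 'I_r -> nat) : finType := {k : 'I_r & 'I_((a k).-1)}.

Lemma lt_sub1 {n : nat} (y : 'I_n.-1) : (y.+1 < n)%N.
Proof. case: y => y hy /=; by case: n hy. Qed.

Definition liftS (n : nat) (y : 'I_n.-1) : 'I_n := Ordinal (lt_sub1 y).

Definition rep r (a : 'I_r -> nat) (ha : forall k, (1 <= a k)%N) (k : 'I_r) : bagV a :=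
  existT (fun k => 'I_(a k)) k (Ordinal (ha k)).

Definition nrep r (a : 'I_r -> nat) (s : Sv a) : bagV a :=
  existT (fun k => 'I_(a k)) (tag s) (liftS (tagged s)).

Definition phi r (a : 'I_r -> nat) (ha : forall k, (1 <= a k)%N)
  (i : 'I_(r + #|Sv a|)) : bagV a :=
  match split i with inl k => rep ha k | inr s => nrep (enum_val s) end.

Lemma tag_eq_ord (I : eqType) (b : I -> nat) (u v : {k : I & 'I_(b k)}) :
  tag u = tag v -> val (tagged u) = val (tagged v) -> u = v.
Proof. by case: u v => k x [k' y] /= e; subst k' => /val_inj ->. Qed.

Lemma sv_eq r (a : 'I_r -> nat) (u v : Sv a) :
  tag u = tag v -> val (tagged u) = val (tagged v) -> u = v.
Proof. exact: tag_eq_ord. Qed.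

Lemma nrep_inj r (a : 'I_r -> nat) : injective (@nrep r a).
Proof.
move=> u v e; apply: sv_eq; first by move: (congr1 tag e).
by move: (congr1 (fun w : bagV a => val (tagged w)) e) => /= [].
Qed.

Lemma rep_inj r (a : 'I_r -> nat) ha : injective (@rep r a ha).
Proof. by move=> u v e; move: (congr1 tag e). Qed.

Lemma rep_nrep r (a : 'I_r -> nat) ha k s : @rep r a ha k != nrep s.
Proof.
apply/eqP=> e; by move: (congr1 (fun w : bagV a => val (tagged w)) e).
Qed.

Lemma card_bagV r (a : 'I_r -> nat) : (forall k, (1 <= a k)%N) ->
  #|bagV a| = (r + #|Sv a|)%N.
Proof.
move=> ha; rewrite /bagV /Sv !card_tagged !sumnE !big_map.
rewrite (eq_bigr (fun j => 1 + (a j).-1)%N) ?big_split /=; last by move=> k _; rewrite card_ord add1n prednK.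
by rewrite -enumT sum1_size size_enum_ord; congr (_ + _)%N; apply: eq_bigr => k _; rewrite card_ord.
Qed.

Lemma phi_bij r (a : 'I_r -> nat) ha : bijective (@phi r a ha).
Proof.
apply: inj_card_bij; last by rewrite card_ord card_bagV.
move=> i j; rewrite /phi => e; apply: (can_inj splitK); move: e.
case: (split i) => k; case: (split j) => k' /=.
- by move/rep_inj ->.
- by move=> e; move: (rep_nrep ha k (enum_val k')); rewrite e eqxx.
- by move=> e; move: (rep_nrep ha k' (enum_val k)); rewrite e eqxx.
- by move/nrep_inj/enum_val_inj ->.
Qed.

Lemma phi_l r (a : 'I_r -> nat) ha j : @phi r a ha (lshift _ j) = rep ha j.
Proof. by rewrite /phi -[lshift _ j]/(unsplit (inl _ j)) unsplitK. Qed.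

Lemma phi_r r (a : 'I_r -> nat) ha s : @phi r a ha (rshift _ s) = nrep (enum_val s).
Proof. by rewrite /phi -[rshift _ s]/(unsplit (inr _ s)) unsplitK. Qed.

Lemma sum_delta (R : semiRingType) n (f : 'I_n -> R) i :
  \sum_k f k * (i == k)%:R = f i.
Proof.
rewrite (bigD1 i) //= eqxx mulr1 big1 ?addr0 // => k /negPf.
by rewrite eq_sym => ->; rewrite mulr0.
Qed.

Lemma sum_tagS (V : nmodType) r (a : 'I_r -> nat) (G : 'I_r -> V) :
  \sum_(s < #|Sv a|) G (tag (enum_val s)) = \sum_k G k *+ (a k).-1.
Proof.
rewrite -(big_enum_val (fun u : Sv a => G (tag u))) /=.
rewrite -(@sig_big_dep _ _ _ _ (fun k => ('I_(a k).-1 : finType)) xpredT (fun _ _ => true) (fun k _ => G k)) /=.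
by apply: eq_bigr => k _; rewrite sumr_const card_ord.
Qed.

Lemma sum_tagSn r (a : 'I_r -> nat) (G : 'I_r -> nat) :
  (\sum_(s < #|Sv a|) G (tag (enum_val s)) = \sum_k G k * (a k).-1)%N.
Proof.
rewrite -(big_enum_val (fun u : Sv a => G (tag u))) /=.
rewrite -(@sig_big_dep _ _ _ _ (fun k => ('I_(a k).-1 : finType)) xpredT (fun _ _ => true) (fun k _ => G k)) /=.
by apply: eq_bigr => k _; rewrite sum_nat_const card_ord mulnC.
Qed.

Lemma main_gen (R : fieldType) r (a : 'I_r -> nat) (ha : forall k, (1 <= a k)%N)
  (p e1 : 'I_r -> R) (eps : 'I_r -> 'I_r -> R) :
  let e' := fun k => if peven k then e1 k else 0 in
  let cr := fun j k : 'I_r => if j == k then e' j else if (j < k)%N then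
     (if peven k then eps j k else 0) else (if peven j then eps k j else 0) in
  char_poly (uniform_weighted_matrix a p e1 eps) =
  char_poly (\matrix_(j, k) (if j == k then p k + (a k).-1%:R * e' k
                             else (a j)%:R * cr j k))
  * \prod_(s < #|Sv a|) ('X - (p (tag (enum_val s)) - e' (tag (enum_val s)))%:P).
Proof.
move=> e' cr.
pose F := @uwm_entry R r a p e1 eps.
have FE : forall u v, F u v = if u == v then p (tag u) else cr (tag u) (tag v) by [].
rewrite /uniform_weighted_matrix -/F.
rewrite (char_poly_bij F (@enum_val_bij (bagV a)) (phi_bij ha)).
set m := #|Sv a|.
set t := fun s : 'I_m => tag (enum_val s).
set d := fun k => p k - e' k.
set K := \matrix_(i,j) F (phi ha i) (phi ha j).
set C : 'M[R]_(r, m) := \matrix_(j,s) (t s == j)%:R.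
set Dg : 'M[R]_m := diag_mx (\row_s d (t s)).
set P := block_mx 1%:M (-C) 0 1%:M : 'M_(r+m).
set P' := block_mx 1%:M C 0 1%:M : 'M_(r+m).
have PP : P' *m P = 1%:M.
  rewrite mulmx_block !mulmx1 !mul1mx !mulmx0 !mul0mx !addr0 !add0r addrC subrr.
  by rewrite -scalar_mx_block.
have KP : K *m P = P *m block_mx (ulsubmx K + C *m dlsubmx K) 0 (dlsubmx K) Dg.
  rewrite -[K in LHS]submxK /P mulmx_block mulmx_block.
  rewrite !mulmx1 !mulmx0 !mul1mx !mul0mx !addr0 !add0r mulNmx addrK.
  rewrite !mulmxN mulNmx mul_mx_diag; congr block_mx; apply/matrixP => i j;
    rewrite !mxE ?sum_delta.
  - rewrite (eq_bigr (fun k => F (rep ha i) (rep ha k) * (t j == k)%:R)); last first.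
      by move=> k _; rewrite !mxE !phi_l.
    rewrite sum_delta phi_l phi_r !FE (negbTE (rep_nrep _ _ _)) (inj_eq (@rep_inj _ _ _)) /=.
    rewrite -/(t j); case: (eqVneq i (t j)) => [<-|ne].
      by rewrite /cr /d eqxx mul1r opprB addrC.
    by rewrite mul0r oppr0 addNr.
  - rewrite (eq_bigr (fun k => F (nrep (enum_val i)) (rep ha k) * (t j == k)%:R)); last first.
      by move=> k _; rewrite !mxE phi_l phi_r.
    rewrite sum_delta !phi_r !FE eq_sym (negbTE (rep_nrep _ _ _)).
    rewrite (inj_eq (@nrep_inj _ _)) (inj_eq enum_val_inj) /= -/(t i) -/(t j).
    case: (eqVneq i j) => [<-|ne].
      by rewrite /cr /d eqxx mulr1n addrC.
    by rewrite mulr0n addNr.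
rewrite -(char_poly_sim PP KP) char_poly_lblock; congr (_ * _); last first.
  rewrite char_poly_trig ?diag_mx_is_trig //; apply: eq_bigr => s _.
  by rewrite !mxE eqxx mulr1n.
congr char_poly; apply/matrixP => j k; rewrite !mxE !phi_l !FE (inj_eq (@rep_inj _ _ _)) /=.
rewrite (eq_bigr (fun s => (t s == j)%:R * cr j k)); last first.
  move=> s _; rewrite !mxE phi_l phi_r FE [nrep _ == _]eq_sym (negbTE (rep_nrep _ _ _)) /= -/(t s).
  by case: (eqVneq (t s) j) => [->|]; rewrite ?mul0r ?mul1r.
rewrite -big_distrl /= (sum_tagS a (fun k' => (k' == j)%:R)).
rewrite (bigD1 j) //= eqxx big1 ?addr0 => [|k' /negPf ->]; last by rewrite mul0rn.
rewrite -mulr_natl mulr1 -mulrnA mul1n.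
case: (eqVneq j k) => [<-|ne]; first by rewrite /cr eqxx.
by rewrite -{2}(prednK (ha j)) mulrS mulrDl mul1r.
Qed.

Lemma mup_prod (R : fieldType) n (G : 'I_n -> R) x :
  mup x (\prod_(i < n) ('X - (G i)%:P)) = (\sum_(i < n) (G i == x))%N.
Proof.
suff [] : (\prod_(i < n) ('X - (G i)%:P)) \is monic /\
   mup x (\prod_(i < n) ('X - (G i)%:P)) = (\sum_(i < n) (G i == x))%N by [].
apply: (big_rec2 (fun (k : nat) (q : {poly R}) => q \is monic /\ mup x q = k)).
  by rewrite monic1 mupNroot // root1.
move=> i k q _ [mq <-]; rewrite monicMl ?monicXsubC // mq; split=> //.
rewrite mupM ?monic_neq0 ?monicXsubC // -['X - _]expr1 mup_XsubCX.
by case: (G i == x).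
Qed.

Lemma diag_case (R : numFieldType) (lam : R) (n q : nat) : (1 <= n)%N -> (q < 4)%N ->
  (if (q == 1%N) || (q == 2%N) then 0 else lam) =
  (match q with 1%N => 0 | 2%N => lam * (n%:R - 1) / n%:R | 3%N => lam | _ => lam / n%:R end)
  + n.-1%:R * (if ~~ odd q then (match q with 1%N => 0 | 2%N => - (lam / n%:R)
                 | 3%N => 0 | _ => lam / n%:R end) else 0).
Proof.
move=> n1 q4; have nz : n%:R != 0 :> R by rewrite pnatr_eq0 -lt0n.
have e : n.-1%:R = n%:R - 1 :> R by rewrite -{2}(prednK n1) -natr1 addrK.
case: q q4 => [|[|[|[|q]]]] //= _; rewrite e; field => //.
Qed.

Lemma d_case (R : numFieldType) (lam : R) (n q : nat) : (1 <= n)%N -> (q < 4)%N ->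
  (match q with 1%N => 0 | 2%N => lam * (n%:R - 1) / n%:R | 3%N => lam | _ => lam / n%:R end)
  - (if ~~ odd q then (match q with 1%N => 0 | 2%N => - (lam / n%:R)
                 | 3%N => 0 | _ => lam / n%:R end) else 0) =
  (if (q == 0%N) || (q == 1%N) then 0 else lam).
Proof.
move=> n1 q4; have nz : n%:R != 0 :> R by rewrite pnatr_eq0 -lt0n.
case: q q4 => [|[|[|[|q]]]] //= _; field => //.
Qed.

Lemma odd_m4 r (k : 'I_r) : odd k.+1 = odd (m4 k).
Proof. by rewrite /m4 odd_mod. Qed.

Lemma m4_lt4 r (k : 'I_r) : (m4 k < 4)%N.
Proof. by rewrite /m4 ltn_pmod. Qed.

Lemma offdiag_aux (R : rcfType) (na nb : nat) (c : R) : (1 <= na)%N -> (1 <= nb)%N ->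
  c * Num.sqrt (na%:R * nb%:R) * (Num.sqrt nb%:R)^-1 = (Num.sqrt na%:R)^-1 * (na%:R * c)
  /\ c * Num.sqrt (nb%:R * na%:R) * (Num.sqrt nb%:R)^-1 = (Num.sqrt na%:R)^-1 * (na%:R * c).
Proof.
move=> ha hb.
have sa : Num.sqrt na%:R != 0 :> R by rewrite sqrtr_eq0 -ltNge ltr0n.
have sb : Num.sqrt nb%:R != 0 :> R by rewrite sqrtr_eq0 -ltNge ltr0n.
rewrite !sqrtrM ?ler0n //; split; rewrite -[X in _ = _ * (X * c)](@sqr_sqrtr _ na%:R) ?ler0n //; field; by rewrite ?sa ?sb.
Qed.

Unset Implicit Arguments.

Theorem mainTheorem3 (R : rcfType) (lam : R) (r : nat) (a : 'I_r -> nat)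
  (eps : 'I_r -> 'I_r -> R) :
  lam != 0 -> (1 <= r)%N -> (forall k, (1 <= a k)%N) ->
  (forall i j : 'I_r, (i < j)%N -> peven j -> eps i j != 0) ->
  let p := fun k : 'I_r =>
    match m4 k with
    | 1%N => 0
    | 2%N => lam * ((a k)%:R - 1) / (a k)%:R
    | 3%N => lam
    | _ => lam / (a k)%:R
    end in
  let e1 := fun k : 'I_r =>
    match m4 k with
    | 1%N => 0
    | 2%N => - (lam / (a k)%:R)
    | 3%N => 0
    | _ => lam / (a k)%:R
    end in
  let M := uniform_weighted_matrix a p e1 eps in
  let p1 := fun k : 'I_r =>
    if (m4 k == 1%N) || (m4 k == 2%N) then 0 else lam in
  let e1' := fun i j : 'I_r => eps i j * Num.sqrt ((a i)%:R * (a j)%:R) in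
  let T1 := sv_threshold_matrix p1 e1' in
  let A := (\sum_(k < r | (m4 k == 0%N) || (m4 k == 1%N)) (a k - 1))%N in
  let B := (\sum_(k < r | (m4 k == 2%N) || (m4 k == 3%N)) (a k - 1))%N in
  forall x : R,
    spec_mult M x = (spec_mult T1 x + (x == 0%R) * A + (x == lam) * B)%N.
Proof.
move=> lnz r1 ha _ p e1 M p1 e1' T1 A B x.
rewrite /spec_mult /M (main_gen ha) mupM ?monic_neq0 ?char_poly_monic ?monic_prod_XsubC //.
rewrite mup_prod -addnA; congr (_ + _)%N.
  congr (mup x _).
  pose S : 'M[R]_r := diag_mx (\row_k (Num.sqrt (a k)%:R)^-1).
  pose S' : 'M[R]_r := diag_mx (\row_k (Num.sqrt (a k)%:R)).
  have sz : forall k, Num.sqrt (a k)%:R != 0 :> R.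
    by move=> k; rewrite sqrtr_eq0 -ltNge ltr0n.
  apply: (@char_poly_sim _ _ _ _ S S').
    apply/matrixP => i j; rewrite mul_diag_mx !mxE.
    by case: (eqVneq i j) => [->|_]; rewrite ?mulr1n ?mulr0n ?mulr0 // mulfV.
  rewrite mul_diag_mx mul_mx_diag; apply/matrixP => j k; rewrite !mxE.
  case: (eqVneq j k) => [<-|ne].
    rewrite mulrC; congr (_ * _).
    rewrite /p1 /p /e1 /peven odd_m4; exact: diag_case (ha j) (m4_lt4 j).
  rewrite /e1' /=.
  have [h1 h2] := offdiag_aux (eps j k) (ha j) (ha k).
  have [h3 h4] := offdiag_aux (eps k j) (ha j) (ha k).
  by case: ifP => _; case: ifP => _; rewrite ?mul0r ?mulr0 ?h1 ?h4.
rewrite (sum_tagSn a (fun k => (p k - (if peven k then e1 k else 0)) == x)).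
rewrite /A /B !big_distrr /= (bigID (fun k : 'I_r => (m4 k == 0%N) || (m4 k == 1%N))) /=.
congr (_ + _)%N.
  apply: eq_bigr => k hk.
  rewrite /p /e1 /peven odd_m4 (d_case lam (ha k) (m4_lt4 k)) hk.
  by rewrite subn1 [0 == x]eq_sym.
apply: eq_big => k.
  by have := m4_lt4 k; case: (m4 k) => [|[|[|[|]]]].
move=> hk; rewrite /p /e1 /peven odd_m4 (d_case lam (ha k) (m4_lt4 k)) (negbTE hk).
by rewrite subn1 [lam == x]eq_sym.
Qed.
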